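(* For every finite simple graph $G=(V,E)$, $$\omega(\overline{X}_G)(x_1,x_2,\dots)=\sum_{W\subseteq V}(-1)^{|V\setminus W|}\prod_{i\ge1}H_{G|_W}(x_i),$$ where $H_{G|_W}(t)=1/I_{G|_W}(-t)$.
   Context: $\overline{X}_G=\sum_\kappa\prod_{v}\prod_{i\in\kappa(v)}x_i$ over proper set colorings $\kappa$ (maps $V\to$ nonempty subsets of $\mathbb{Z}_{>0}$, adjacent vertices get disjoint sets). $I_H(t)=\sum_n a_nt^n$ is the independence polynomial ($a_n$ = number of independent sets of size $n$); $H_G(t)=\sum_{n\ge0}|\mathcal{H}_G(n)|t^n$ is the generating series of heaps of $G$ by size (a heap being an equivalence class of words over $V$ under swapping adjacent nonadjacent-in-$G$ distinct letters), which equals $1/I_G(-t)$. $\omega$ is the standard involution on symmetric functions ($\omega(p_\lambda)=(-1)^{|\lambda|-\ell(\lambda)}p_\lambda$), extended degree-wise. $G|_W$ is the induced subgraph. *)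

(* Defs.v *)
From HB Require Import structures.
From mathcomp Require Import all_boot all_order all_algebra.
From mathcomp Require Import mpoly.
Set Implicit Arguments. Unset Strict Implicit. Unset Printing Implicit Defensive.
Import Order.TTheory GRing.Theory.
Local Open Scope ring_scope.

Definition simple_graph (T : finType) (e : rel T) : Prop :=
  ssrbool.symmetric e /\ irreflexive e.

Definition independent (T : finType) (e : rel T) (S : {set T}) : bool :=
  [forall u in S, forall v in S, ~~ e u v].

(* a_k(G|_W) : number of independent sets of size k of the induced subgraph
   G|_W (independent sets of G|_W are exactly the independent sets of G
   contained in W). *)
Definition indep_count (T : finType) (e : rel T) (W : {set T}) (k : nat) : nat :=
  #|[set S : {set T} | (S \subset W) && independent e S && (#|S| == k)]|.

Definition indep_poly (T : finType) (e : rel T) (W : {set T}) : {poly rat} :=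
  \sum_(k < #|T|.+1) (indep_count e W k)%:R *: 'X^k.

Definition indep_poly_neg (T : finType) (e : rel T) (W : {set T}) : {poly rat} :=
  \sum_(k < #|T|.+1) ((-1) ^+ k * (indep_count e W k)%:R) *: 'X^k.

(* Coefficient of t^m in the formal power series H_{G|_W}(t) = 1/I_{G|_W}(-t).
   Since I(-t) = 1 - u(t) with u(0) = 0, 1/I(-t) = sum_j u(t)^j and the terms
   with j > m do not contribute to the coefficient of t^m. *)
Definition H_coef (T : finType) (e : rel T) (W : {set T}) (m : nat) : rat :=
  (\sum_(j < m.+1) (1 - indep_poly_neg e W) ^+ j)`_m.

Definition hcomp (n : nat) (d : nat) (p : {mpoly rat[n]}) : {mpoly rat[n]} :=
  \sum_(m <- msupp p | mdeg m == d) p@_m *: 'X_[m].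

(* Degree-d part of  X̄_G(x_1,...,x_n,0,0,...): sum over proper set colourings
   kappa : V -> nonempty subsets of {1..n}, adjacent vertices receiving
   disjoint sets, with sum_v |kappa(v)| = d, of prod_v prod_{i in kappa v} x_i. *)
Definition proper_set_coloring (T : finType) (e : rel T) (n : nat)
  (k : {ffun T -> {set 'I_n}}) : bool :=
  [forall v, k v != set0] && [forall u, forall v, e u v ==> [disjoint k u & k v]].

Definition Xbar_deg (T : finType) (e : rel T) (n d : nat) : {mpoly rat[n]} :=
  \sum_(k : {ffun T -> {set 'I_n}} |
          proper_set_coloring e k && ((\sum_v #|k v|)%N == d))
     \prod_v \prod_(i in k v) 'X_i.

Definition RHS_deg (T : finType) (e : rel T) (n d : nat) : {mpoly rat[n]} :=
  hcomp d (\sum_(W : {set T}) (-1) ^+ #|~: W| *: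
      \prod_(i < n) \sum_(m < d.+1) H_coef e W m *: ('X_i ^+ m)).

Definition psum (n k : nat) : {mpoly rat[n]} := \sum_(i < n) 'X_i ^+ k.
Definition psum_part (n : nat) (la : seq nat) : {mpoly rat[n]} :=
  \prod_(k <- la) psum n k.

Definition is_part_of (d : nat) (la : seq nat) : bool :=
  [&& sorted geq la, all (fun k => 0 < k)%N la & sumn la == d].

(* omega_rel n d f g : g = omega(f) for homogeneous symmetric functions of
   degree d, viewed in n >= d variables (where Lambda^d -> Lambda^d_n is an
   isomorphism and the p_la, la |- d, are linearly independent):
   f = sum_la c_la p_la  and  g = sum_la (-1)^{d - l(la)} c_la p_la. *)
Definition omega_rel (n d : nat) (f g : {mpoly rat[n]}) : Prop :=
  exists (s : seq (seq nat)) (c : seq nat -> rat),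
    [/\ all (is_part_of d) s,
        f = \sum_(la <- s) c la *: psum_part n la &
        g = \sum_(la <- s) ((-1) ^+ (d - size la) * c la) *: psum_part n la].
Arguments omega_rel n d f g : clear implicits.

(* Main.v *)
Require Import Defs.
From HB Require Import structures.
From mathcomp Require Import all_boot all_order all_algebra.
From mathcomp Require Import mpoly.
From mathcomp Require Import ring zify.
Set Implicit Arguments. Unset Strict Implicit. Unset Printing Implicit Defensive.
Import Order.TTheory GRing.Theory Num.Theory.
Local Open Scope ring_scope.


Section Newton.
Variable R : comNzRingType.

Definition Newt (f Q : {poly R}) (d : nat) :=
  forall j, (j <= d)%N -> ('X * f^`() - Q * f)`_j = 0.

Lemma low0M (p q : {poly R}) d :
  (forall j, (j <= d)%N -> p`_j = 0) -> forall j, (j <= d)%N -> (q * p)`_j = 0.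
Proof.
move=> H j jd; rewrite coefM big1 // => i _.
by rewrite H ?mulr0 // (leq_trans (leq_subr _ _)).
Qed.

Lemma NewtM f g Q Q' d : Newt f Q d -> Newt g Q' d -> Newt (f * g) (Q + Q') d.
Proof.
move=> Hf Hg j jd.
have -> : 'X * (f * g)^`() - (Q + Q') * (f * g) =
   g * ('X * f^`() - Q * f) + f * ('X * g^`() - Q' * g).
  by rewrite derivM; ring.
by rewrite coefD (low0M _ Hf) ?(low0M _ Hg) ?addr0.
Qed.

Lemma Newt1 d : Newt 1 0 d.
Proof. by move=> j _; rewrite derivC mulr0 mul0r subr0 coef0. Qed.

Lemma Newt_prod (I : Type) (r : seq I) (P : pred I) (F G : I -> {poly R}) d :
  (forall i, P i -> Newt (F i) (G i) d) ->
  Newt (\prod_(i <- r | P i) F i) (\sum_(i <- r | P i) G i) d.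
Proof.
move=> H; apply: (big_ind2 (fun a b => Newt a b d)) => //.
- exact: Newt1.
- by move=> ? ? ? ?; apply: NewtM.
Qed.

Lemma Newt_coef f Q d : Newt f Q d <->
  forall j, (j <= d)%N -> f`_j *+ j = \sum_(k < j.+1) Q`_k * f`_(j - k).
Proof.
have E j : ('X * f^`() - Q * f)`_j = f`_j *+ j - \sum_(k < j.+1) Q`_k * f`_(j - k).
  rewrite coefB coefXM coefM; case: j => [|j].
    by rewrite eqxx mulr0n big_ord1 sub0r.
  by rewrite coef_deriv.
split=> H j jd; first by apply/eqP; rewrite -subr_eq0 -E H.
by rewrite E H // subrr.
Qed.

Lemma Newt_scale (A Q f F : {poly R}) (x : R) d :
  Newt A Q d -> (forall j, (j <= d)%N -> f`_j = A`_j * x ^+ j) ->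
  (forall j, (j <= d)%N -> F`_j = Q`_j * x ^+ j) -> Newt f F d.
Proof.
move=> /Newt_coef HA Hf HF; apply/Newt_coef => j jd.
rewrite Hf // -mulrnAl HA // mulr_suml; apply: eq_bigr => [[k /=]] kj _.
have kd : (k <= d)%N by rewrite (leq_trans _ jd) // -ltnS.
rewrite HF // Hf ?(leq_trans (leq_subr _ _)) //.
by rewrite mulrACA -exprD subnKC // -ltnS.
Qed.
End Newton.


Section OR.
Variable n : nat.
Local Notation MP := {mpoly rat[n]}.

Definition OR (d : nat) (f g : MP) :=
  exists r : seq (rat * seq nat), [/\ all (fun x => is_part_of d x.2) r,
    f = \sum_(x <- r) x.1 *: psum_part n x.2 &
    g = \sum_(x <- r) ((-1) ^+ (d - size x.2) * x.1) *: psum_part n x.2].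

Lemma OR0 d : OR d 0 0.
Proof. by exists [::]; rewrite !big_nil. Qed.

Lemma ORD d f g f' g' : OR d f g -> OR d f' g' -> OR d (f + f') (g + g').
Proof.
move=> [r [a1 -> ->]] [r' [a2 -> ->]]; exists (r ++ r').
by rewrite !big_cat all_cat a1 a2.
Qed.

Lemma ORZ d c f g : OR d f g -> OR d (c *: f) (c *: g).
Proof.
move=> [r [a1 -> ->]]; exists [seq (c * x.1, x.2) | x <- r]; split.
- by rewrite all_map.
- by rewrite big_map scaler_sumr; apply: eq_bigr => x _; rewrite scalerA.
- by rewrite big_map scaler_sumr; apply: eq_bigr => x _; rewrite scalerA mulrCA.
Qed.

Lemma ORsum d (I : Type) (s : seq I) (P : pred I) (F G : I -> MP) :
  (forall i, P i -> OR d (F i) (G i)) ->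
  OR d (\sum_(i <- s | P i) F i) (\sum_(i <- s | P i) G i).
Proof.
move=> H; apply: (big_ind2 (OR d)) => //; [exact: OR0 | exact: ORD].
Qed.

Lemma size_le_sumn (la : seq nat) : all (fun k => 0 < k)%N la -> (size la <= sumn la)%N.
Proof.
elim: la => //= a la IH /andP[a0 /IH]; rewrite -addn1 addnC => h.
by apply: leq_add.
Qed.

Lemma psum_part_cat a b : psum_part n (a ++ b) = psum_part n a * psum_part n b.
Proof. by rewrite /psum_part big_cat. Qed.

Lemma psum_part_sort a : psum_part n (sort geq a) = psum_part n a.
Proof. by rewrite /psum_part; apply: perm_big; exact: permEl (perm_sort _ _). Qed.

Lemma ORM d1 d2 f g f' g' : OR d1 f g -> OR d2 f' g' ->
  OR (d1 + d2) (f * f') (g * g').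
Proof.
move=> [r [a1 -> ->]] [r' [a2 -> ->]].
exists [seq (x.1 * y.1, sort geq (x.2 ++ y.2)) | x <- r, y <- r']; split.
- apply/allP => z /allpairsP [[x y] [/= xr yr ->]] /=.
  move/allP: a1 => /(_ _ xr) /and3P[_ px sx].
  move/allP: a2 => /(_ _ yr) /and3P[_ py sy].
  apply/and3P; split.
  + by apply: sort_sorted => a b; rewrite /geq leq_total.
  + by rewrite all_sort all_cat px py.
  + by rewrite (perm_sumn (permEl (perm_sort _ _))) sumn_cat (eqP sx) (eqP sy).
- rewrite big_allpairs_dep big_distrlr; apply: eq_bigr => x _; apply: eq_bigr => y _.
  by rewrite /= psum_part_sort psum_part_cat -scalerAl -scalerAr scalerA.
- rewrite big_allpairs_dep big_distrlr /=.
  rewrite big_seq_cond [RHS]big_seq_cond; apply: eq_bigr => x /andP[xr _].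
  rewrite big_seq_cond [RHS]big_seq_cond; apply: eq_bigr => y /andP[yr _].
  move/allP: a1 => /(_ _ xr) /and3P[_ px sx].
  move/allP: a2 => /(_ _ yr) /and3P[_ py sy].
  rewrite /= psum_part_sort psum_part_cat -scalerAl -scalerAr scalerA.
  rewrite size_sort size_cat.
  have hx := size_le_sumn px; have hy := size_le_sumn py.
  rewrite (eqP sx) in hx; rewrite (eqP sy) in hy.
  have -> : (d1 + d2 - (size x.2 + size y.2) = (d1 - size x.2) + (d2 - size y.2))%N.
    clear -hx hy; move: hx hy; set a := size x.2; set b := size y.2; move=> hx hy; lia.
  by rewrite exprD; congr (_ *: _); ring.
Qed.

Lemma regroup (r : seq (rat * seq nat)) (w : seq nat -> rat) (h : seq nat -> MP) :
  \sum_(x <- r) (w x.2 * x.1) *: h x.2 =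
  \sum_(la <- undup (map snd r)) (w la * \sum_(x <- r | x.2 == la) x.1) *: h la.
Proof.
symmetry.
transitivity (\sum_(la <- undup (map snd r)) \sum_(x <- r)
   (if x.2 == la then (w x.2 * x.1) *: h x.2 else 0)).
  apply: eq_bigr => la _; rewrite mulr_sumr scaler_suml big_mkcond.
  by apply: eq_bigr => x _; case: eqP => // ->.
rewrite exchange_big big_seq [RHS]big_seq; apply: eq_bigr => x xr.
have xs : x.2 \in undup (map snd r) by rewrite mem_undup map_f.
rewrite (big_rem _ xs) eqxx big_seq big1; first by rewrite Monoid.mulm1.
move=> y.
rewrite mem_rem_uniq ?undup_uniq // inE => /andP[yx _].
by rewrite eq_sym (negbTE yx).
Qed.

Lemma OR_omega d f g : OR d f g -> omega_rel n d f g.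
Proof.
move=> [r [a -> ->]].
exists (undup (map snd r)), (fun la => \sum_(x <- r | x.2 == la) x.1); split.
- apply/allP => la; rewrite mem_undup => /mapP [x xr ->].
  by move/allP: a => /(_ _ xr).
- have := regroup r (fun _ => 1) (psum_part n).
  under eq_bigr do rewrite mul1r.
  by under [X in _ = X -> _]eq_bigr do rewrite mul1r.
- exact: regroup r (fun la => (-1) ^+ (d - size la)) (psum_part n).
Qed.

End OR.


Section Rec.
Variable n : nat.
Local Notation MP := {mpoly rat[n]}.

Lemma OR_single k (c : rat) : (0 < k)%N ->
  @OR n k (c *: psum n k) (((-1) ^+ k.+1 * c) *: psum n k).
Proof.
move=> k0; exists [:: (c, [:: k])]; split.
- by rewrite /= /is_part_of /= k0 addn0 eqxx.
- by rewrite big_seq1 /psum_part big_seq1.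
- rewrite big_seq1 /psum_part big_seq1.
  have -> : (-1) ^+ (k - size [:: k]) = (-1) ^+ k.+1 :> rat.
    case: k k0 => // k _; rewrite /= subn1 /= !exprS mulrA mulrNN mulr1 mul1r.
    by [].
  by [].
Qed.

Lemma OR_one : @OR n 0 1 1.
Proof.
exists [:: (1, [::])]; split => //.
- by rewrite big_seq1 /psum_part big_nil scale1r.
- by rewrite big_seq1 /psum_part big_nil /= expr0 mul1r scale1r.
Qed.

Lemma OR_newton (P P' Qt Qt' : {poly MP}) (q : nat -> rat) d :
  P`_0 = 1 -> P'`_0 = 1 -> Newt P Qt d -> Newt P' Qt' d ->
  Qt`_0 = 0 -> Qt'`_0 = 0 ->
  (forall k, (0 < k <= d)%N -> Qt`_k = q k *: psum n k) ->
  (forall k, (0 < k <= d)%N -> Qt'`_k = ((-1) ^+ k.+1 * q k) *: psum n k) ->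
  forall j, (j <= d)%N -> @OR n j P`_j P'`_j.
Proof.
move=> P0 P'0 /Newt_coef NP /Newt_coef NP' Q0 Q'0 HQ HQ'.
elim/ltn_ind => j IH jd.
case: j IH jd => [|j] IH jd; first by rewrite P0 P'0; exact: OR_one.
have jn : (j.+1)%:R != 0 :> rat by rewrite pnatr_eq0.
have E (p : MP) s : p *+ j.+1 = s -> p = (j.+1%:R)^-1 *: s.
  by move=> <-; rewrite -scaler_nat scalerA mulVf // scale1r.
rewrite (E _ _ (NP _ jd)) (E _ _ (NP' _ jd)); apply: ORZ; apply: ORsum => k _.
case: k => [[|k] kj] /=.
  by rewrite Q0 Q'0 !mul0r; exact: OR0.
have kd : (0 < k.+1 <= d)%N by rewrite /= (leq_trans _ jd) // -ltnS.
rewrite HQ // HQ' //.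
have := ORM (OR_single (q k.+1) (isT : (0 < k.+1)%N))
    (IH (j.+1 - k.+1)%N _ (leq_trans (leq_subr _ _) jd)).
rewrite subnKC; last by rewrite -ltnS.
by apply; rewrite subSS ltnS leq_subr.
Qed.
End Rec.


Section Inv.
Variable R : comNzRingType.

Definition low0 (p : {poly R}) d := forall j, (j <= d)%N -> p`_j = 0.

Lemma low0D p q d : low0 p d -> low0 q d -> low0 (p + q) d.
Proof. by move=> hp hq j jd; rewrite coefD hp ?hq ?addr0. Qed.

Lemma low0Ml p q d : low0 p d -> low0 (q * p) d.
Proof. exact: low0M. Qed.

Lemma low0Mr p q d : low0 p d -> low0 (p * q) d.
Proof. by move=> h; rewrite mulrC; apply: low0Ml. Qed.

Lemma low0N p d : low0 p d -> low0 (- p) d.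
Proof. by move=> h j jd; rewrite coefN h ?oppr0. Qed.

Lemma low0_deriv p d : low0 p d -> low0 ('X * p^`()) d.
Proof.
move=> h [|j] jd; rewrite coefXM //= coef_deriv h ?mul0rn //.
Qed.

Lemma Newt_inv (J Hs : {poly R}) d : low0 (1 - J * Hs) d ->
  Newt J ('X * J^`() * Hs) d /\ Newt Hs (- ('X * J^`() * Hs)) d.
Proof.
move=> hE.
have N1 : Newt J ('X * J^`() * Hs) d.
  move=> j jd.
  have -> : 'X * J^`() - 'X * J^`() * Hs * J = ('X * J^`()) * (1 - J * Hs) by ring.
  exact: (low0Ml _ hE).
split => // j jd.
set Z := 'X * Hs^`() - - ('X * J^`() * Hs) * Hs.
have hJZ : low0 (J * Z) d.
  have -> : J * Z = - ('X * (1 - J * Hs)^`()) - ('X * J^`() - 'X * J^`() * Hs * J) * Hs.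
    rewrite /Z derivB derivC derivM; ring.
  apply: low0D; first by apply: low0N; apply: low0_deriv.
  by apply: low0N; apply: low0Mr => k kd; apply: N1.
have -> : Z = Hs * (J * Z) + (1 - J * Hs) * Z by ring.
by move: j jd; apply: low0D; [apply: low0Ml | apply: low0Mr].
Qed.
End Inv.


Section Graph.
Variables (T : finType) (e : rel T) (W : {set T}).

Lemma independent0 : independent e set0.
Proof. by apply/forall_inP => u; rewrite inE. Qed.

Lemma count0 : indep_count e W 0 = 1%N.
Proof.
rewrite /indep_count -(cards1 (set0 : {set T})); apply: eq_card => S; rewrite !inE cards_eq0; case: eqP => [->|_].
  by rewrite sub0set independent0.
by rewrite andbF.
Qed.

Lemma count_big m : (#|T| < m)%N -> indep_count e W m = 0%N.
Proof.
move=> h; rewrite /indep_count; apply: eq_card0 => S; rewrite !inE.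
apply/negP => /andP[_ /eqP hS]; move: (max_card S); rewrite hS.
by rewrite leqNgt h.
Qed.

Lemma coefI m : (indep_poly e W)`_m = (indep_count e W m)%:R.
Proof.
rewrite /indep_poly -(poly_def _ (fun k => (indep_count e W k)%:R)) coef_poly; case: ltnP => // h.
by rewrite count_big.
Qed.

Lemma coefJ m : (indep_poly_neg e W)`_m = (-1) ^+ m * (indep_count e W m)%:R.
Proof.
rewrite /indep_poly_neg -(poly_def _ (fun k => (-1) ^+ k * (indep_count e W k)%:R)) coef_poly; case: ltnP => // h.
by rewrite count_big // mulr0.
Qed.

Variable d : nat.
Definition Hs : {poly rat} := \poly_(m < d.+1) H_coef e W m.
Let J := indep_poly_neg e W.
Let u := 1 - J.

Lemma u0 : u`_0 = 0.
Proof. by rewrite /u coefB coef1 coefJ count0 expr0 mul1r subrr. Qed.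

Lemma uX j m : (m < j)%N -> (u ^+ j)`_m = 0.
Proof.
elim: j m => // j IH m mj; rewrite exprS coefM big1 // => [[i /= ilt]] _.
case: i ilt => [|i] ilt; first by rewrite u0 mul0r.
by rewrite IH ?mulr0 //; lia.
Qed.

Lemma HsE m : (m <= d)%N -> Hs`_m = (\sum_(j < d.+1) u ^+ j)`_m.
Proof.
move=> md; rewrite /Hs coef_poly ltnS md /H_coef.
rewrite -/J -/u !coef_sum.
rewrite (big_ord_widen d.+1 (fun j => (u ^+ j)`_m)) //.
rewrite [RHS](bigID (fun j : 'I_d.+1 => (j < m.+1)%N)) /=.
rewrite [X in _ = _ + X]big1 ?addr0 // => j; rewrite -leqNgt => hj.
by apply: uX.
Qed.

Lemma low0_JHs : low0 (1 - J * Hs) d.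
Proof.
move=> m md; rewrite coefB.
have -> : (J * Hs)`_m = (J * \sum_(j < d.+1) u ^+ j)`_m.
  rewrite !coefM; apply: eq_bigr => [[i /= il]] _; rewrite HsE //; lia.
have -> : J = 1 - u by rewrite /u; ring.
have -> : (1 - u) * \sum_(j < d.+1) u ^+ j = 1 - u ^+ d.+1.
  by rewrite -[1 - u ^+ _]opprB subrX1; ring.
by rewrite coefB uX // subr0 subrr.
Qed.


End Graph.


Lemma Newt_map (R : comNzRingType) (phi : {rmorphism rat -> R}) (A Q : {poly rat}) d :
  Newt A Q d -> Newt (map_poly phi A) (map_poly phi Q) d.
Proof.
move=> /Newt_coef HA; apply/Newt_coef => j jd.
rewrite !coef_map -rmorphMn HA // rmorph_sum; apply: eq_bigr => k _.
by rewrite rmorphM !coef_map.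
Qed.

Section Multi.
Variables (T : finType) (e : rel T) (W : {set T}) (n d : nat).
Local Notation MP := {mpoly rat[n]}.

Definition fW (i : 'I_n) : {poly MP} :=
  \sum_(S : {set T} | (S \subset W) && independent e S) ('X_i ^+ #|S|)%:P * 'X^#|S|.

Lemma coef_fW i m : (fW i)`_m = (indep_count e W m)%:R *: 'X_i ^+ m.
Proof.
rewrite /fW coef_sum.
under eq_bigr do rewrite coefCM coefXn.
rewrite (bigID (fun S : {set T} => #|S| == m)) /= [X in _ + X]big1; last first.
  by move=> S /andP[_ /negbTE h]; rewrite eq_sym h mulr0.
rewrite addr0 (eq_bigr (fun _ => 'X_i ^+ m)); last first.
  by move=> S /andP[_ /eqP ->]; rewrite eqxx mulr1.
rewrite sumr_const scaler_nat /indep_count; congr (_ *+ _).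
by apply: eq_card => S; rewrite !inE. 
Qed.

Definition Gm : MP -> {poly MP} :=
  mmap (polyC \o mpolyC n (R := rat)) (fun i : 'I_n => ('X_i : MP)%:P * 'X).

Definition hW (i : 'I_n) : MP := \sum_(m < d.+1) H_coef e W m *: ('X_i ^+ m).

Lemma Gm_hW i : Gm (hW i) = \sum_(m < d.+1) (H_coef e W m *: 'X_i ^+ m)%:P * 'X^m.
Proof.
rewrite /Gm (big_morph _ (mmapD _ _) (mmap0 _ _)); apply: eq_bigr => m _.
rewrite mmapZ (rmorphXn (mmap _ _)) /= mmapX mmap1U exprMn mulrA.
by rewrite -rmorphXn -rmorphM mul_mpolyC.
Qed.

Lemma coef_Gm_hW i m : (m <= d)%N -> (Gm (hW i))`_m = H_coef e W m *: 'X_i ^+ m.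
Proof.
move=> md; rewrite Gm_hW coef_sum.
rewrite (bigD1 (Ordinal (_ : m < d.+1)%N)) //= coefCM coefXn eqxx mulr1.
rewrite big1 ?addr0 // => k /eqP hk; rewrite coefCM coefXn.
case: eqP => [hm|]; last by rewrite mulr0.
by case: hk; apply: val_inj; rewrite /= hm.
Qed.

End Multi.


Section Assemble.
Variables (T : finType) (e : rel T) (W : {set T}) (n d : nat).
Local Notation MP := {mpoly rat[n]}.
Let J := indep_poly_neg e W.
Let H := Hs e W d.
Let Q := 'X * J^`() * H.
Let QI : {poly rat} := \poly_(k < d.+1) ((-1) ^+ k * Q`_k).
Let q k := QI`_k.

Let NJH : Newt J Q d /\ Newt H (- Q) d.
Proof. apply: Newt_inv. exact: low0_JHs. Qed.

Let sgn2 k : (-1) ^+ k * (-1) ^+ k = 1 :> rat.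
Proof. by rewrite -exprMn mulrNN mulr1 expr1n. Qed.

Let NI : Newt (indep_poly e W) QI d.
Proof.
apply: (Newt_scale (proj1 NJH) (x := -1)) => j jd.
  by rewrite coefI /J coefJ mulrC mulrA sgn2 mul1r.
by rewrite /QI coef_poly ltnS jd mulrC.
Qed.

Let q0 : q 0 = 0.
Proof. by rewrite /q /QI coef_poly /= /Q -mulrA coefXM mulr0. Qed.

Let phi := mpolyC n (R := rat).

Definition QW (i : 'I_n) : {poly MP} := \poly_(k < d.+1) (q k *: 'X_i ^+ k).
Definition QH (i : 'I_n) : {poly MP} :=
  \poly_(k < d.+1) (((-1) ^+ k.+1 * q k) *: 'X_i ^+ k).

Let NfW i : Newt (fW e W i) (QW i) d.
Proof.
apply: (Newt_scale (Newt_map phi NI) (x := 'X_i)) => j jd.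
  by rewrite coef_fW coef_map /phi coefI mul_mpolyC.
by rewrite /QW coef_poly ltnS jd coef_map /phi mul_mpolyC.
Qed.

Let NhW i : Newt (Gm (hW e W d i)) (QH i) d.
Proof.
apply: (Newt_scale (Newt_map phi (proj2 NJH)) (x := 'X_i)) => j jd.
  by rewrite coef_Gm_hW // coef_map /phi /H /Hs coef_poly ltnS jd mul_mpolyC.
rewrite /QH coef_poly ltnS jd coef_map /phi mul_mpolyC coefN; congr (_ *: _).
by rewrite /q /QI coef_poly ltnS jd exprS -!mulrA (mulrA ((-1) ^+ j)) sgn2 mul1r mulN1r.
Qed.

Lemma OR_W : OR d (\prod_(i < n) fW e W i)`_d (\prod_(i < n) Gm (hW e W d i))`_d.
Proof.
apply: (@OR_newton n _ _ (\sum_(i < n) QW i) (\sum_(i < n) QH i) q d) => //.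
- rewrite coef0_prod big1 // => i _; by rewrite coef_fW count0 scale1r expr0.
- rewrite coef0_prod big1 // => i _.
  by rewrite coef_Gm_hW // /H_coef big_ord1 (expr0 (1 - _)) coef1 scale1r expr0.
- exact: Newt_prod.
- exact: Newt_prod.
- by rewrite coef_sum big1 // => i _; rewrite coef_poly q0 scale0r.
- by rewrite coef_sum big1 // => i _; rewrite coef_poly q0 mulr0 scale0r.
- move=> k /andP[_ kd]; rewrite coef_sum /psum scaler_sumr; apply: eq_bigr => i _.
  by rewrite coef_poly ltnS kd.
- move=> k /andP[_ kd]; rewrite coef_sum /psum scaler_sumr; apply: eq_bigr => i _.
  by rewrite coef_poly ltnS kd.
Qed.
End Assemble.


Section HC.
Variables (n : nat).
Local Notation MP := {mpoly rat[n]}.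

Lemma mmap1_Gm (m : 'X_{1..n}) :
  mmap1 (fun i : 'I_n => ('X_i : MP)%:P * 'X) m = ('X_[m])%:P * 'X^(mdeg m).
Proof.
rewrite /mmap1; under eq_bigr do rewrite exprMn -rmorphXn.
by rewrite big_split /= prodrXr -rmorph_prod -mpolyXE_id mdegE.
Qed.

Lemma hcomp_Gm d (p : MP) : hcomp d p = (Gm p)`_d.
Proof.
rewrite /Gm /mmap /hcomp coef_sum big_mkcond /=; apply: eq_bigr => m _.
rewrite mmap1_Gm mulrA -rmorphM coefMXn mul_mpolyC.
case: eqP => [<-|hd]; first by rewrite ltnn subnn coefC.
case: ltnP => // h; rewrite coefC; case: eqP => // h2.
by exfalso; apply: hd; lia.
Qed.
End HC.

Lemma RHS_eq (T : finType) (e : rel T) n d :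
  RHS_deg e n d = \sum_(W : {set T}) (-1) ^+ #|~: W| *: (\prod_(i < n) Gm (hW e W d i))`_d.
Proof.
rewrite /RHS_deg hcomp_Gm /Gm (big_morph _ (mmapD _ _) (mmap0 _ _)) coef_sum.
apply: eq_bigr => W _.
rewrite mmapZ (rmorph_prod (mmap _ _)) /= coefCM mul_mpolyC.
by [].
Qed.


Lemma prod_bool (T : finType) (A : pred T) (b : T -> bool) :
  \prod_(v in A) ((b v)%:R : rat) = ([forall v in A, b v])%:R.
Proof.
case: (boolP [forall v in A, b v]) => h.
  by rewrite big1 // => v vA; move/forall_inP: h => /(_ v vA) ->.
move: h; rewrite negb_forall_in => /exists_inP [v vA /negbTE bv].
by rewrite (bigD1 v) //= bv mul0r.
Qed.

Lemma prod_boolT (T : finType) (b : T -> bool) :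
  \prod_v ((b v)%:R : rat) = ([forall v, b v])%:R.
Proof.
case: (boolP [forall v, b v]) => h.
  by rewrite big1 // => v _; move/forallP: h => /(_ v) ->.
move: h; rewrite negb_forall => /existsP [v /negbTE bv].
by rewrite (bigD1 v) //= bv mul0r.
Qed.

Lemma incl_excl (T : finType) (c : T -> bool) :
  \sum_(W : {set T}) (-1) ^+ #|~: W| * ([forall v, (v \notin W) ==> c v])%:R
  = ([forall v, ~~ c v])%:R :> rat.
Proof.
pose g (v : T) (b : bool) : rat := if b then 1 else - (c v)%:R.
have E W : (-1) ^+ #|~: W| * ([forall v, (v \notin W) ==> c v])%:R
           = \prod_v g v (v \in W).
  rewrite (bigID (fun v => v \in W)) /= big1; last by move=> v ->.
  rewrite mul1r.
  rewrite (eq_bigr (fun v => - (c v)%:R)); last by move=> v /negbTE ->.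
  rewrite (eq_bigl (fun v => v \in ~: W)); last by move=> v; rewrite inE.
  rewrite prodrN prod_bool; congr (_ * _); congr (_%:R); congr (nat_of_bool _).
  apply/forallP/forall_inP => h v.
    by rewrite inE => hv; move/implyP: (h v); apply.
  by apply/implyP => hv; apply: h; rewrite inE.
under eq_bigr do rewrite E.
rewrite (reindex (fun f : {ffun T -> bool} => [set v | f v])) /=; last first.
  exists (fun W : {set T} => [ffun v => v \in W]) => f _.
    by apply/ffunP => v; rewrite ffunE inE.
  by apply/setP => v; rewrite inE ffunE.
under eq_bigr do under eq_bigr do rewrite inE.
rewrite -(bigA_distr_bigA (fun v b => g v b)).
rewrite -prod_boolT; apply: eq_bigr => v _.
by rewrite big_bool /g; case: (c v); rewrite ?subrr ?subr0.
Qed.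


Section Tr.
Variables (T : finType) (e : rel T) (n d : nat) (W : {set T}).
Local Notation MP := {mpoly rat[n]}.

Definition tr (k : {ffun T -> {set 'I_n}}) : {ffun 'I_n -> {set T}} :=
  [ffun i => [set v | i \in k v]].
Definition tr' (F : {ffun 'I_n -> {set T}}) : {ffun T -> {set 'I_n}} :=
  [ffun v => [set i | v \in F i]].

Definition colsum (k : {ffun T -> {set 'I_n}}) := (\sum_v #|k v|)%N.
Definition mon (k : {ffun T -> {set 'I_n}}) : MP := \prod_v \prod_(i in k v) 'X_i.
Definition propE (k : {ffun T -> {set 'I_n}}) :=
  [forall u, forall v, e u v ==> [disjoint k u & k v]].
Definition good (k : {ffun T -> {set 'I_n}}) :=
  [forall v, (v \notin W) ==> (k v == set0)].

Lemma colsum_tr k : (\sum_i #|tr k i|)%N = colsum k.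
Proof.
rewrite /colsum.
transitivity (\sum_i \sum_v ((i \in k v) : nat))%N.
  apply: eq_bigr => i _; rewrite ffunE -sum1_card big_mkcond /=.
  by rewrite [LHS](eq_bigr (fun v => nat_of_bool (i \in k v))) // => v _; rewrite inE; case: (i \in k v).
rewrite exchange_big; apply: eq_bigr => v _.
by rewrite -sum1_card [RHS]big_mkcond; apply: eq_bigr => i _; case: (i \in k v).
Qed.

Lemma mon_tr k : \prod_i 'X_i ^+ #|tr k i| = mon k.
Proof.
rewrite /mon.
transitivity (\prod_i \prod_v (if i \in k v then 'X_i else 1 : MP)).
  apply: eq_bigr => i _; rewrite -big_mkcond /= ffunE -prodr_const.
  by apply: eq_bigl => v; rewrite inE.
rewrite exchange_big; apply: eq_bigr => v _.
by rewrite [RHS]big_mkcond.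
Qed.

Lemma pred_tr k :
  (tr k \in ffun_on (fun S : {set T} => (S \subset W) && independent e S))
  = propE k && good k.
Proof.
apply/ffun_onP/andP => [h|[hp hg] i].
  split.
    apply/forallP => u; apply/forallP => v; apply/implyP => huv.
    rewrite -setI_eq0; apply/eqP/setP => i; rewrite !inE.
    apply/negP => /andP[iu iv].
    have /andP[_ /forall_inP /(_ u)] := h i; rewrite ffunE inE => /(_ iu).
    by move/forall_inP => /(_ v); rewrite inE => /(_ iv); rewrite huv.
  apply/forallP => v; apply/implyP => vW; apply/eqP/setP => i; rewrite inE.
  apply/negP => iv; have /andP[/subsetP /(_ v) + _] := h i.
  by rewrite ffunE inE => /(_ iv); rewrite (negbTE vW).
apply/andP; split.
  apply/subsetP => v; rewrite ffunE inE => iv.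
  apply/negPn/negP => vW; move/forallP: hg => /(_ v); rewrite vW /=.
  by move/eqP => h; move: iv; rewrite h inE.
apply/forall_inP => u; rewrite ffunE inE => iu; apply/forall_inP => v.
rewrite inE => iv; apply/negP => huv.
move/forallP: hp => /(_ u) /forallP /(_ v); rewrite huv /= => /disjointFr.
by move=> /(_ i iu); rewrite iv.
Qed.

Lemma fW_coef : (\prod_(i < n) fW e W i)`_d =
  \sum_(k | propE k && good k && (colsum k == d)) mon k.
Proof.
rewrite /fW (bigA_distr_big (fun S : {set T} => (S \subset W) && independent e S)).
rewrite coef_sum.
under eq_bigr => F _.
  rewrite big_split /= -rmorph_prod prodrXr coefCM coefXn.
  over.
rewrite (reindex tr) /=; last first.
  by exists tr' => F _; apply/ffunP => x; apply/setP => y; rewrite !ffunE !inE !ffunE !inE.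
rewrite [LHS]big_mkcond [RHS]big_mkcond; apply: eq_bigr => k _.
rewrite pred_tr colsum_tr mon_tr.
case: (propE k && good k) => //; rewrite [d == _]eq_sym.
by case: eqP => _; rewrite ?mulr1 ?mulr0.
Qed.
End Tr.


Lemma Xbar_eq (T : finType) (e : rel T) n d :
  Xbar_deg e n d = \sum_(W : {set T}) (-1) ^+ #|~: W| *: (\prod_(i < n) fW e W i)`_d.
Proof.
rewrite /Xbar_deg [LHS]big_mkcond.
under [RHS]eq_bigr do rewrite fW_coef scaler_sumr big_mkcond.
rewrite exchange_big; apply: eq_bigr => k _.
rewrite /proper_set_coloring -/(propE e k) -/(colsum k).
case: (propE e k); case: (colsum k == d); rewrite ?andbF ?andbT /=;
  try by rewrite big1 // => W _; rewrite ?andbF.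
rewrite (eq_bigr (fun W => ((-1) ^+ #|~: W| * (good W k)%:R) *: mon k)); last first.
  by move=> W _; case: (good W k); rewrite ?mulr1 ?mulr0 ?scale0r.
rewrite -scaler_suml /good (incl_excl (fun v => k v == set0)).
by case: [forall v, k v != set0]; rewrite ?scale1r ?scale0r.
Qed.

Theorem mainTheorem7 (T : finType) (e : rel T) :
  simple_graph e ->
  forall n d : nat, (d <= n)%N ->
    omega_rel n d (Xbar_deg e n d) (RHS_deg e n d).
Proof.
move=> _ n d _; rewrite RHS_eq Xbar_eq; apply: OR_omega.
by apply: ORsum => W _; apply: ORZ; apply: OR_W.
Qed.
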